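(* Under the hypotheses of the previous statement (a connected hypergraph $\mathcal{H}=(\mathcal{V},\mathcal{E})$ with vertex $w$ and proper subsets $\mathcal{V}_1,\mathcal{V}_2$ of $\mathcal{V}$, $\mathcal{V}_1\cup\mathcal{V}_2=\mathcal{V}$, $\mathcal{V}_1\cap\mathcal{V}_2=\{w\}$, every edge containing $w$ or contained in some $\mathcal{V}_i$), let $\mathcal{I}'_{(\mathcal{V}_1,\mathcal{V}_2)}(\mathcal{H})$ be the set of those $\mathcal{V}_0\in\mathcal{I}(\mathcal{H})$ such that $\mathcal{V}_i\subseteq\mathcal{V}_0$ for some $i\in\{1,2\}$ and $\mathcal{H}-\mathcal{V}_0$ is connected. Then $(\lambda-1)^2$ divides $P(\mathcal{H},\lambda)$ if and only if $\lambda^2$ divides $\sum_{\mathcal{V}_0\in\mathcal{I}'_{(\mathcal{V}_1,\mathcal{V}_2)}(\mathcal{H})}P(\mathcal{H}-\mathcal{V}_0,\lambda)$.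
   Context: A hypergraph $\mathcal{H}=(\mathcal{V},\mathcal{E})$ consists of a finite vertex set $\mathcal{V}$ and a set $\mathcal{E}$ of subsets of $\mathcal{V}$, each of size at least $1$, called edges. For a positive integer $\lambda$, a weak proper $\lambda$-colouring of $\mathcal{H}$ is a map $\phi:\mathcal{V}\to\{1,\dots,\lambda\}$ such that $|\{\phi(v):v\in e\}|>1$ for every $e\in\mathcal{E}$. $P(\mathcal{H},\lambda)$ denotes the number of weak proper $\lambda$-colourings; it is a polynomial in $\lambda$. $\mathcal{H}$ is connected if for any two vertices $v_1,v_2$ there is a sequence of edges $e_0,\dots,e_k$ with $v_1\in e_0$, $v_2\in e_k$, $e_i\cap e_{i+1}\ne\emptyset$. For $\mathcal{V}_0\subseteq\mathcal{V}$, $\mathcal{H}[\mathcal{V}_0]$ has vertex set $\mathcal{V}_0$ and edge set $\{e\in\mathcal{E}:e\subseteq\mathcal{V}_0\}$; $\mathcal{H}-\mathcal{V}_0=\mathcal{H}[\mathcal{V}\setminus\mathcal{V}_0]$; $\mathcal{I}(\mathcal{H})$ is the set of subsets $\mathcal{V}_0\subseteq\mathcal{V}$ such that $\mathcal{H}[\mathcal{V}_0]$ has no edges. *)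

(* Defs.v *)
From HB Require Import structures.
From mathcomp Require Import all_boot all_order all_algebra.
From Stdlib Require Import ClassicalEpsilon.
Set Implicit Arguments. Unset Strict Implicit. Unset Printing Implicit Defensive.
Import Order.TTheory GRing.Theory Num.Theory.

Record hypergraph (T : finType) := Hypergraph {
  hverts : {set T};
  hedges : {set {set T}} }.

Definition wf_hypergraph (T : finType) (H : hypergraph T) : Prop :=
  forall e, e \in hedges H -> e \subset hverts H /\ e != set0.

Definition weak_proper (T : finType) (H : hypergraph T) (n : nat)
    (f : {ffun {x : T | x \in hverts H} -> 'I_n}) : bool :=
  [forall e in hedges H,
     1 < #|[set f x | x : {x : T | x \in hverts H} & val x \in e]|].

Definition ncol (T : finType) (H : hypergraph T) (n : nat) : nat :=
  #|[set f : {ffun {x : T | x \in hverts H} -> 'I_n} | weak_proper f]|.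

Definition is_chrom_poly (T : finType) (H : hypergraph T) (p : {poly rat}) : Prop :=
  forall n : nat, (0 < n)%N -> (p.[n%:R] = (ncol H n)%:R)%R.

Definition chrom_poly (T : finType) (H : hypergraph T) : {poly rat} :=
  epsilon (inhabits (0 : {poly rat})%R) (is_chrom_poly H).

Definition connected (T : finType) (H : hypergraph T) : Prop :=
  forall v1 v2, v1 \in hverts H -> v2 \in hverts H ->
    v1 = v2 \/
    exists (e0 : {set T}) (s : seq {set T}),
      [/\ e0 \in hedges H, all (fun e => e \in hedges H) s,
          v1 \in e0, v2 \in last e0 s &
          path (fun a b => a :&: b != set0) e0 s].

Definition induced (T : finType) (H : hypergraph T) (V0 : {set T}) : hypergraph T :=
  Hypergraph V0 [set e in hedges H | e \subset V0].

Definition hdelete (T : finType) (H : hypergraph T) (V0 : {set T}) : hypergraph T :=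
  induced H (hverts H :\: V0).

Definition indep (T : finType) (H : hypergraph T) (V0 : {set T}) : bool :=
  (V0 \subset hverts H) && [forall e in hedges H, ~~ (e \subset V0)].

Definition asbool (P : Prop) : bool :=
  if excluded_middle_informative P then true else false.

(* Main.v *)
Set Warnings "-all".
Require Import Defs.
From HB Require Import structures.
From mathcomp Require Import all_boot all_order all_algebra.
From Stdlib Require Import Classical ClassicalEpsilon.
Import Order.TTheory GRing.Theory Num.Theory.
Set Implicit Arguments. Unset Strict Implicit. Unset Printing Implicit Defensive.

Section Comb.
Variable T : finType.

Definition colset (G : hypergraph T) (n : nat) : {set {ffun T -> option 'I_n}} :=
  [set g : {ffun T -> option 'I_n} | [forall x, (g x == None) == (x \notin hverts G)]
     && [forall e in hedges G, 1 < #|[set g x | x in e]|]].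

Lemma incolP (G : hypergraph T) n (g : {ffun T -> option 'I_n}) : reflect
  ((forall x, (g x == None) = (x \notin hverts G)) /\
   (forall e, e \in hedges G -> 1 < #|[set g x | x in e]|)) (g \in colset G n).
Proof.
rewrite inE; apply: (iffP andP) => [[/forallP H1 /forall_inP H2]|[H1 H2]].
  by split=> [x|//]; exact: (eqP (H1 x)).
by split; [apply/forallP=> x; rewrite H1|apply/forall_inP].
Qed.

Definition phi (G : hypergraph T) n (f : {ffun {x : T | x \in hverts G} -> 'I_n}) :
  {ffun T -> option 'I_n} :=
  [ffun x => if insub x is Some y then Some (f y) else None].

Lemma phi_val (G : hypergraph T) n f (y : {x : T | x \in hverts G}) : @phi G n f (val y) = Some (f y).
Proof. by rewrite ffunE valK. Qed.

Lemma phi_out (G : hypergraph T) n f x : x \notin hverts G -> @phi G n f x = None.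
Proof. by move=> hx; rewrite ffunE insubF //; apply/negbTE. Qed.

Lemma phi_inj (G : hypergraph T) n : injective (@phi G n).
Proof.
move=> f1 f2 E; apply/ffunP => y.
by have := congr1 (fun g : {ffun T -> option 'I_n} => g (val y)) E; rewrite /= !phi_val => -[].
Qed.

Lemma phi_img (G : hypergraph T) n f (e : {set T}) : e \subset hverts G ->
  [set @phi G n f x | x in e] =
  Some @: [set f y | y : {x : T | x \in hverts G} & val y \in e].
Proof.
move=> se; apply/setP => o; apply/imsetP/imsetP.
  move=> [x xe ->]; have xV : x \in hverts G by exact: (subsetP se).
  exists (f (Sub x xV)); last by rewrite -phi_val.
  by apply/imsetP; exists (Sub x xV); rewrite ?inE.
move=> [c /imsetP [y]]; rewrite inE => ye -> ->.
by exists (val y) => //; rewrite phi_val.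
Qed.

Definition oget (A : eqType) (o : option A) : o != None -> A :=
  match o as o0 return o0 != None -> A with
  | Some a => fun _ => a
  | None => fun h => False_rect _ (notF h)
  end.

Lemma ogetK (A : eqType) (o : option A) (h : o != None) : Some (oget h) = o.
Proof. by case: o h. Qed.

Lemma ncolE G n : wf_hypergraph G -> ncol G n = #|colset G n|.
Proof.
move=> wf; rewrite /ncol.
have -> : colset G n = @phi G n @: [set f | weak_proper f].
  apply/setP => g; apply/idP/imsetP.
    move=> /incolP [H1 H2].
    have hg : forall y : {x : T | x \in hverts G}, g (val y) != None.
      by move=> y; rewrite H1 (valP y).
    pose f0 := [ffun y => oget (hg y)].
    have eg : g = phi f0.
      apply/ffunP => x; case: (boolP (x \in hverts G)) => xV.
        by rewrite -[x]/(val (Sub x xV : {x : T | x \in hverts G})) phi_val ffunE ogetK.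
      by rewrite phi_out //; apply/eqP; rewrite H1.
    clearbody f0; exists f0 => //; rewrite inE.
    apply/forall_inP => e he; have := H2 e he.
    by rewrite eg phi_img ?(card_imset _ (@Some_inj _)); [|case: (wf e he)].
  move=> [f]; rewrite inE => /forall_inP wp ->; apply/incolP; split.
    move=> x; case: (boolP (x \in hverts G)) => xV /=.
      by rewrite -[x]/(val (Sub x xV : {x : T | x \in hverts G})) phi_val.
    by rewrite phi_out.
  move=> e he; rewrite phi_img ?(card_imset _ (@Some_inj _)); first exact: wp.
  by case: (wf e he).
by rewrite card_imset //; exact: phi_inj.
Qed.


Lemma gt1P (A B : finType) (g : A -> B) (e : {set A}) :
  reflect (exists x y, [/\ x \in e, y \in e & g x != g y]) (1 < #|[set g x | x in e]|).
Proof.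
apply: (iffP card_gt1P).
  move=> [u [v [/imsetP [x xe ->] /imsetP [y ye ->] neq]]].
  by exists x, y.
move=> [x [y [xe ye neq]]]; exists (g x), (g y); split => //; exact: imset_f.
Qed.

Definition preim n (g : {ffun T -> option 'I_n.+1}) : {set T} :=
  [set x | g x == Some ord_max].

Definition Wd n (o : option 'I_n) : option 'I_n.+1 := omap (widen_ord (leqnSn n)) o.
Definition Ud n (o : option 'I_n.+1) : option 'I_n :=
  obind (fun c : 'I_n.+1 => insub (val c) : option 'I_n) o.

Lemma WK n (o : option 'I_n.+1) : o != Some ord_max -> Wd (Ud o) = o.
Proof.
case: o => [c|] //= hc; rewrite /Ud /=; case: insubP => [u hu eu|hu] /=.
  by congr Some; apply: val_inj.
by case/negP: hu; move: hc; rewrite (inj_eq (@Some_inj _)) -val_eqE /= ltn_neqAle -ltnS ltn_ord andbT.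
Qed.

Lemma UdNone n (o : option 'I_n.+1) : (Ud o == None) = (o == None) || (o == Some ord_max).
Proof.
case: o => [c|] //=; rewrite /Ud /=; case: insubP => [u hu eu|hu] /=.
  by rewrite (inj_eq (@Some_inj _)) -val_eqE /=; apply/esym/negbTE; rewrite neq_ltn hu.
by rewrite (inj_eq (@Some_inj _)) -val_eqE /= eqn_leq -ltnS ltn_ord leqNgt hu.
Qed.

Lemma Wd_top n (o : option 'I_n) : (Wd o == Some ord_max) = false.
Proof. by case: o => [c|] //=; rewrite (inj_eq (@Some_inj _)) -val_eqE /=; apply/negbTE; rewrite neq_ltn ltn_ord. Qed.

Lemma Wd_inj n : injective (@Wd n).
Proof.
move=> [c1|] [c2|] //= [] E.
by congr Some; apply: val_inj.
Qed.

Definition psi n (V0 : {set T}) (h : {ffun T -> option 'I_n}) : {ffun T -> option 'I_n.+1} :=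
  [ffun x => if x \in V0 then Some ord_max else Wd (h x)].

Definition unpsi n (g : {ffun T -> option 'I_n.+1}) : {ffun T -> option 'I_n} :=
  [ffun x => Ud (g x)].

Lemma wf_hdelete (G : hypergraph T) V0 : wf_hypergraph G -> wf_hypergraph (hdelete G V0).
Proof.
move=> wf e; rewrite /hdelete /induced /= inE => /andP [he se]; split => //.
by case: (wf e he).
Qed.

Lemma colset_preim_indep (G : hypergraph T) n (g : {ffun T -> option 'I_n.+1}) :
  wf_hypergraph G -> g \in colset G n.+1 -> indep G (preim g).
Proof.
move=> wf /incolP [H1 H2]; apply/andP; split.
  apply/subsetP => x; rewrite inE => /eqP gx.
  by move: (H1 x); rewrite gx /= => /esym /negbFE.
apply/forall_inP => e he; apply/negP => se.
have /gt1P [x [y [xe ye]]] := H2 e he.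
have := subsetP se x xe; have := subsetP se y ye.
by rewrite !inE => /eqP -> /eqP ->; rewrite eqxx.
Qed.

Lemma bij_core (G : hypergraph T) n V0 : wf_hypergraph G -> indep G V0 ->
  #|[set g in colset G n.+1 | preim g == V0]| = #|colset (hdelete G V0) n|.
Proof.
move=> wf /andP [sV0 /forall_inP iV0].
have wlt (c : 'I_n) : widen_ord (leqnSn n) c != ord_max.
  by rewrite -val_eqE /= neq_ltn ltn_ord.
have -> : [set g in colset G n.+1 | preim g == V0] = psi V0 @: colset (hdelete G V0) n.
  apply/setP => g; rewrite inE; apply/andP/imsetP.
    move=> [/incolP [H1 H2] /eqP pg].
    have gV0 x : (x \in V0) = (g x == Some ord_max) by rewrite -pg inE.
    exists (unpsi g).
      apply/incolP; split.
        by move=> x; rewrite /hdelete /induced /= ffunE !inE negb_and negbK UdNone -H1 gV0 orbC.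
      move=> e; rewrite inE => /andP [he se]; apply/gt1P.
      have /gt1P [x [y [xe ye gxy]]] := H2 e he; exists x, y; split => //.
      have nx : x \notin V0 by have := subsetP se x xe; rewrite inE => /andP [].
      have ny : y \notin V0 by have := subsetP se y ye; rewrite inE => /andP [].
      move: nx ny gxy; rewrite !gV0 !ffunE => nx ny.
      by apply: contra => /eqP E; rewrite -(WK nx) -(WK ny) E.
    apply/ffunP => x; rewrite !ffunE gV0.
    case: (boolP (g x == Some ord_max)) => [/eqP -> //|].
    by move=> h; rewrite WK.
  move=> [h /incolP [H1 H2] ->].
  have pg : preim (psi V0 h) = V0.
    apply/setP => x; rewrite !inE ffunE; case: (x \in V0); rewrite ?eqxx //.
    by rewrite Wd_top.
  split; last by rewrite pg.
  apply/incolP; split.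
    move=> x; rewrite ffunE; case: (boolP (x \in V0)) => xV0 /=.
      by rewrite (subsetP sV0 x xV0).
    have := H1 x; rewrite /hdelete /induced /= inE xV0 /=.
    by case: (h x).
  move=> e he; apply/gt1P.
  case: (boolP (e \subset hverts G :\: V0)) => se.
    have he' : e \in hedges (hdelete G V0) by rewrite /hdelete /induced /= inE he se.
    have /gt1P [x [y [xe ye hxy]]] := H2 e he'; exists x, y; split => //.
    have := subsetP se x xe; have := subsetP se y ye; rewrite !inE !ffunE.
    move=> /andP [/negbTE -> _] /andP [/negbTE -> _].
    by rewrite (inj_eq (@Wd_inj n)).
  have [x xe xV0] : exists2 x, x \in e & x \in V0.
    move: se; case: (wf e he) => seV _ /subsetPn [x xe].
    by rewrite inE (subsetP seV x xe) andbT negbK => ?; exists x.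
  have [y ye yV0] : exists2 y, y \in e & y \notin V0.
    by have /subsetPn [y ye yV] := iV0 e he; exists y.
  exists x, y; split => //; rewrite !ffunE xV0 (negbTE yV0).
  by rewrite eq_sym Wd_top.
rewrite card_in_imset //.
move=> h1 h2 /incolP [H1 _] /incolP [H2 _] E; apply/ffunP => x.
have := congr1 (fun g : {ffun T -> option 'I_n.+1} => g x) E; rewrite /= !ffunE.
case: (boolP (x \in V0)) => xV0.
  have := H1 x; have := H2 x; rewrite /hdelete /induced /= inE xV0 /=.
  by move=> /eqP -> /eqP ->.
exact: Wd_inj.
Qed.

Lemma core (G : hypergraph T) n (Q : pred {set T}) : wf_hypergraph G ->
  \sum_(V0 : {set T} | indep G V0 && Q V0) #|colset (hdelete G V0) n| =
  #|[set g in colset G n.+1 | Q (preim g)]|.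
Proof.
move=> wf.
rewrite -sum1_card (partition_big (@preim n) (fun V0 => indep G V0 && Q V0)).
  apply: eq_bigr => V0 /andP [iV0 QV0]; rewrite -(bij_core n wf iV0) -sum1_card.
  apply: eq_bigl => g; rewrite !inE.
  by case: (boolP (preim g == V0)) => [/eqP ->|]; rewrite ?andbT ?andbF // QV0 andbT.
by move=> g; rewrite inE => /andP [gc ->]; rewrite (colset_preim_indep wf gc).
Qed.

Lemma sym_le (G : hypergraph T) m v (c c' : 'I_m) :
  #|[set g in colset G m | g v == Some c]| <= #|[set g in colset G m | g v == Some c']|.
Proof.
pose s := fun a : 'I_m => if a == c then c' else if a == c' then c else a.
have sK : cancel s s.
  move=> a; rewrite /s.
  have [->|ac] := eqVneq a c; first by rewrite eqxx; case: eqP.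
  have [->|ac'] := eqVneq a c'; first by rewrite !eqxx.
  by rewrite (negbTE ac) (negbTE ac').
have sinj : injective s := can_inj sK.
have omi : injective (omap s).
  by move=> [a|] [b|] //= [] /sinj ->.
pose F := fun g : {ffun T -> option 'I_m} => [ffun x => omap s (g x)].
have Finj : injective F.
  move=> g1 g2 E; apply/ffunP => x.
  by have := congr1 (fun g : {ffun T -> option 'I_m} => g x) E; rewrite /= !ffunE => /omi.
rewrite -(card_imset _ Finj); apply: subset_leq_card; apply/subsetP => g'.
move=> /imsetP [g]; rewrite inE => /andP [/incolP [H1 H2] /eqP gv] ->.
rewrite inE ffunE gv /= /s eqxx eqxx andbT; apply/incolP; split.
  by move=> x; rewrite ffunE -H1; case: (g x).
move=> e he; have /gt1P [x [y [xe ye gxy]]] := H2 e he; apply/gt1P.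
by exists x, y; split => //; rewrite !ffunE (inj_eq omi).
Qed.

Lemma count_top (G : hypergraph T) m v : v \in hverts G ->
  #|colset G m.+1| = (m.+1 * #|[set g in colset G m.+1 | g v == Some ord_max]|)%N.
Proof.
move=> vV.
rewrite -sum1_card (partition_big (fun g : {ffun T -> option 'I_m.+1} => odflt ord0 (g v)) predT) //.
set K := #|[set g in colset G m.+1 | g v == Some ord_max]|.
rewrite (eq_bigr (fun=> K)); first by rewrite sum_nat_const card_ord.
move=> c _.
have -> : K = #|[set g in colset G m.+1 | g v == Some c]|.
  by apply/eqP; rewrite eqn_leq !sym_le.
rewrite -sum1_card; apply: eq_bigl => g; rewrite in_set.
case: (boolP (g \in colset G m.+1)) => //= /incolP [H1 _].
by move: (H1 v); rewrite vV; case: (g v).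
Qed.

Lemma colset0 (G : hypergraph T) : hverts G != set0 -> #|colset G 0| = 0%N.
Proof.
case/set0Pn => v vV; apply/eqP; rewrite cards_eq0; apply/set0Pn => -[g /incolP [H1 _]].
move: (H1 v); rewrite vV.
by case: (g v) => [[]|].
Qed.

Lemma colset_empty (G : hypergraph T) n : wf_hypergraph G -> hverts G = set0 -> #|colset G n| = 1%N.
Proof.
move=> wf V0; apply/eqP/cards1P; exists [ffun _ => None]; apply/setP => g.
rewrite [in RHS]inE; apply/idP/eqP.
  move=> /incolP [H1 _]; apply/ffunP => x; rewrite ffunE; apply/eqP.
  by rewrite H1 V0 inE.
move=> ->; apply/incolP; split; first by move=> x; rewrite ffunE V0 inE.
by move=> e he; case: (wf e he); rewrite V0 subset0 => ->.
Qed.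

Lemma colset1 (G : hypergraph T) e : wf_hypergraph G -> e \in hedges G -> #|colset G 1| = 0%N.
Proof.
move=> wf he; apply/eqP; rewrite cards_eq0; apply/set0Pn => -[g /incolP [H1 H2]].
have /gt1P [x [y [xe ye]]] := H2 e he.
case: (wf e he) => se _.
have := H1 x; have := H1 y; rewrite (subsetP se x xe) (subsetP se y ye) /=.
case: (g x) => [[[|a] ha]|]; case: (g y) => [[[|b] hb]|] //=.
Qed.

Lemma wf_induced (G : hypergraph T) A : wf_hypergraph G -> wf_hypergraph (induced G A).
Proof.
move=> wf e; rewrite /induced /= inE => /andP [he se]; split => //.
by case: (wf e he).
Qed.

Lemma split_card (G : hypergraph T) n A B : wf_hypergraph G ->
  hverts G = A :|: B -> [disjoint A & B] ->
  (forall e, e \in hedges G -> (e \subset A) || (e \subset B)) ->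
  #|colset G n| = (#|colset (induced G A) n| * #|colset (induced G B) n|)%N.
Proof.
move=> wf VAB dAB sE.
have nAB x : x \in A -> x \notin B.
  by move=> xA; apply/negP => xB; move: dAB; rewrite disjoint_subset => /subsetP /(_ x xA); rewrite inE xB.
pose mg := fun p : {ffun T -> option 'I_n} * {ffun T -> option 'I_n} =>
  [ffun x => if x \in A then p.1 x else p.2 x].
rewrite -cardsX.
have -> : colset G n = mg @: setX (colset (induced G A) n) (colset (induced G B) n).
  apply/setP => g; apply/idP/imsetP.
    move=> /incolP [H1 H2].
    exists ([ffun x => if x \in A then g x else None], [ffun x => if x \in B then g x else None]).
      rewrite inE; apply/andP; split; apply/incolP; split.
      - move=> x; rewrite ffunE /induced /=; case: ifP => xA //=.
        by rewrite H1 VAB inE xA.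
      - move=> e; rewrite /induced /= inE => /andP [he se].
        have /gt1P [x [y [xe ye gxy]]] := H2 e he; apply/gt1P; exists x, y.
        by rewrite !ffunE (subsetP se x xe) (subsetP se y ye).
      - move=> x; rewrite ffunE /induced /=; case: ifP => xB //=.
        by rewrite H1 VAB inE xB orbT.
      - move=> e; rewrite /induced /= inE => /andP [he se].
        have /gt1P [x [y [xe ye gxy]]] := H2 e he; apply/gt1P; exists x, y.
        by rewrite !ffunE (subsetP se x xe) (subsetP se y ye).
    apply/ffunP => x; rewrite !ffunE /=.
    case: (boolP (x \in A)) => xA; case: (boolP (x \in B)) => xB //=.
    by apply/eqP; rewrite H1 VAB inE (negbTE xA) (negbTE xB).
  move=> [[g1 g2]]; rewrite inE => /andP [/incolP [H11 H12] /incolP [H21 H22]] ->.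
  apply/incolP; split.
    move=> x; rewrite ffunE /=; case: ifP => xA.
      by rewrite H11 /induced /= VAB !inE xA.
    by rewrite H21 /induced /= VAB !inE xA.
  move=> e he; apply/gt1P; case/orP: (sE e he) => se.
    have he' : e \in hedges (induced G A) by rewrite /induced /= inE he se.
    have /gt1P [x [y [xe ye gxy]]] := H12 e he'; exists x, y.
    by rewrite !ffunE /= (subsetP se x xe) (subsetP se y ye).
  have he' : e \in hedges (induced G B) by rewrite /induced /= inE he se.
  have /gt1P [x [y [xe ye gxy]]] := H22 e he'; exists x, y.
  have xA : x \in A = false by apply/negP => /nAB; rewrite (subsetP se x xe).
  have yA : y \in A = false by apply/negP => /nAB; rewrite (subsetP se y ye).
  by rewrite !ffunE /= xA yA.
apply: card_in_imset => -[p1 p2] [q1 q2]; rewrite !in_setX.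
move=> /andP [/incolP [Hp1 _] /incolP [Hp2 _]] /andP [/incolP [Hq1 _] /incolP [Hq2 _]] E.
have E' x : (if x \in A then p1 x else p2 x) = (if x \in A then q1 x else q2 x).
  by have := congr1 (fun g : {ffun T -> option 'I_n} => g x) E; rewrite /= !ffunE.
congr pair; apply/ffunP => x; have := E' x.
  case: ifP => xA // _.
  by have := Hp1 x; have := Hq1 x; rewrite /induced /= xA => /eqP -> /eqP ->.
case: (boolP (x \in B)) => xB.
  by rewrite (negbTE (contraL (@nAB x) xB)).
move=> _; have := Hp2 x; have := Hq2 x; rewrite /induced /= xB => /eqP -> /eqP ->.
by [].
Qed.

End Comb.

Local Open Scope ring_scope.

Lemma poly_eq_nat (p q : {poly rat}) :
  (forall n : nat, (0 < n)%N -> p.[n%:R] = q.[n%:R]) -> p = q.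
Proof.
move=> H; apply/eqP; rewrite -subr_eq0; apply/negPn/negP => nz.
pose rs := [seq (i.+1)%:R : rat | i <- iota 0 (size (p - q))].
have := max_poly_roots nz (rs := rs).
rewrite size_map size_iota ltnn.
have -> : all (root (p - q)) rs.
  by apply/allP => x /mapP [i _ ->]; rewrite /root hornerD hornerN H // subrr.
have -> : uniq rs.
  by rewrite map_inj_uniq ?iota_uniq // => i j /eqP; rewrite eqr_nat => /eqP [].
by move/(_ isT isT).
Qed.

Lemma dvdp_big (I : Type) (r : seq I) (P : pred I) (F : I -> {poly rat}) (d : {poly rat}) :
  (forall i, P i -> d %| F i) -> d %| \sum_(i <- r | P i) F i.
Proof.
move=> H; apply: (big_ind (fun q => d %| q)) => //=.
by move=> x y; apply: dvdp_add.
Qed.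

Lemma asboolP (P : Prop) : reflect P (asbool P).
Proof. by rewrite /asbool; case: excluded_middle_informative => h; constructor. Qed.

Lemma chrom_of (T : finType) (G : hypergraph T) (p : {poly rat}) :
  (forall n, p.[n%:R] = (ncol G n)%:R) -> chrom_poly G = p.
Proof.
move=> Hp.
have : is_chrom_poly G (chrom_poly G).
  by apply: epsilon_spec; exists p => n _; exact: Hp.
move=> Hc; apply: poly_eq_nat => n n0; rewrite Hc // Hp.
Qed.

Lemma step (T : finType) (G : hypergraph T) v m : wf_hypergraph G -> v \in hverts G ->
  (forall V0, indep G V0 && (v \in V0) ->
     (chrom_poly (hdelete G V0)).[m%:R] = (ncol (hdelete G V0) m)%:R) ->
  (ncol G m.+1)%:R = m.+1%:R *
    (\sum_(V0 : {set T} | indep G V0 && (v \in V0)) chrom_poly (hdelete G V0)).[m%:R].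
Proof.
move=> wf vV H.
rewrite horner_sum (eq_bigr _ H) -natr_sum -natrM.
rewrite (eq_bigr (fun V0 => #|colset (hdelete G V0) m|)); last first.
  by move=> V0 _; exact: (ncolE m (@wf_hdelete _ _ V0 wf)).
rewrite (core m (fun V0 => v \in V0) wf) (ncolE _ wf) (count_top m vV).
suff -> : [set g in colset G m.+1 | v \in preim g] = [set g in colset G m.+1 | g v == Some ord_max] by [].
by apply/setP => g; rewrite !inE.
Qed.

Lemma chrom_empty (T : finType) (G : hypergraph T) : wf_hypergraph G -> hverts G = set0 ->
  forall n, (chrom_poly G).[n%:R] = (ncol G n)%:R.
Proof.
move=> wf V0 n.
have Hp : forall m, (1 : {poly rat}).[m%:R] = (ncol G m)%:R.
  by move=> m; rewrite -polyC1 hornerC (ncolE _ wf) colset_empty.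
by rewrite (chrom_of Hp).
Qed.

Lemma chromE_aux (T : finType) k : forall G : hypergraph T, wf_hypergraph G ->
  (#|hverts G| <= k)%N -> forall n, (chrom_poly G).[n%:R] = (ncol G n)%:R.
Proof.
elim: k => [|k IH] G wf hk.
  apply: chrom_empty => //; apply/eqP; rewrite -cards_eq0 -leqn0 //.
case: (set_0Vmem (hverts G)) => [V0 | [v vV]]; first exact: chrom_empty.
have Hsub : forall V0 m, indep G V0 && (v \in V0) ->
    (chrom_poly (hdelete G V0)).[m%:R] = (ncol (hdelete G V0) m)%:R.
  move=> V0 m /andP [/andP [sV0 _] vV0]; apply: IH; first exact: wf_hdelete.
  rewrite /hdelete /induced /=.
  have h : (#|hverts G :\: V0| <= #|hverts G :\ v|)%N.
    apply: subset_leq_card; apply/subsetP => x; rewrite !inE => /andP [xV0 xV].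
    by rewrite xV andbT; apply: contraNneq xV0 => ->.
  move: hk; rewrite (cardsD1 v (hverts G)) vV add1n ltnS => hk.
  exact: leq_trans h hk.
have Hp : forall m, ('X * ((\sum_(V0 : {set T} | indep G V0 && (v \in V0))
      chrom_poly (hdelete G V0)) \Po ('X - 1))).[m%:R] = (ncol G m)%:R.
  case=> [|m].
    rewrite hornerM hornerX mul0r (ncolE _ wf) colset0 //; apply/set0Pn; exists v.
    by [].
  rewrite (step wf vV (fun V0 => Hsub V0 m)) hornerM hornerX horner_comp.
  by rewrite hornerD hornerN hornerX -polyC1 hornerC -addn1 natrD addrK.
by move=> n; rewrite (chrom_of Hp).
Qed.

Lemma chromE (T : finType) (G : hypergraph T) : wf_hypergraph G ->
  forall n, (chrom_poly G).[n%:R] = (ncol G n)%:R.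
Proof. by move=> wf; apply: (@chromE_aux T #|hverts G|). Qed.

Lemma X2_split (T : finType) (G : hypergraph T) A B : wf_hypergraph G ->
  hverts G = A :|: B -> [disjoint A & B] -> A != set0 -> B != set0 ->
  (forall e, e \in hedges G -> (e \subset A) || (e \subset B)) ->
  'X ^+ 2 %| chrom_poly G.
Proof.
move=> wf VAB dAB A0 B0 sE.
have wfA := @wf_induced _ G A wf; have wfB := @wf_induced _ G B wf.
have -> : chrom_poly G = chrom_poly (induced G A) * chrom_poly (induced G B).
  apply: chrom_of => n; rewrite hornerM !chromE // !ncolE //.
  by rewrite (split_card n wf VAB dAB sE) natrM.
have hX : forall C, C != set0 -> wf_hypergraph (induced G C) -> 'X %| chrom_poly (induced G C).
  move=> C C0 wfC; have := dvdp_XsubCl (chrom_poly (induced G C)) 0.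
  rewrite polyC0 subr0 => ->.
  have := chromE wfC 0; rewrite ncolE // colset0 // mulr0n => H0.
  by rewrite /root H0.
by rewrite expr2; apply: dvdp_mul; apply: hX.
Qed.

Lemma disconn_split (T : finType) (G : hypergraph T) : wf_hypergraph G -> ~ connected G ->
  exists A B, [/\ hverts G = A :|: B, [disjoint A & B], A != set0, B != set0 &
    forall e, e \in hedges G -> (e \subset A) || (e \subset B)].
Proof.
move=> wf nc.
have [v1 [v2 [v1V [v2V nr]]]] : exists v1 v2, [/\ v1 \in hverts G, v2 \in hverts G &
   ~ (v1 = v2 \/ exists (e0 : {set T}) (s : seq {set T}),
      [/\ e0 \in hedges G, all (fun e => e \in hedges G) s,
          v1 \in e0, v2 \in last e0 s &
          path (fun a b => a :&: b != set0) e0 s])].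
  apply: NNPP => hn; apply: nc => v1 v2 h1 h2; apply: NNPP => hr; apply: hn.
  by exists v1, v2; split.
pose reach v := v1 = v \/ exists (e0 : {set T}) (s : seq {set T}),
      [/\ e0 \in hedges G, all (fun e => e \in hedges G) s,
          v1 \in e0, v \in last e0 s &
          path (fun a b => a :&: b != set0) e0 s].
have ext : forall a b e, reach a -> e \in hedges G -> a \in e -> b \in e -> reach b.
  move=> a b e [<-|[e0 [s [he0 hs v1e0 ale hp]]]] he ae be; right.
    by exists e, [::]; split.
  exists e0, (rcons s e); split => //.
  - by rewrite all_rcons he.
  - by rewrite last_rcons.
  rewrite rcons_path hp /=; apply/set0Pn; exists a; rewrite inE ale ae.
  by [].
pose A := [set v in hverts G | asbool (reach v)].
exists A, (hverts G :\: A); split.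
- apply/setP => x; rewrite !inE; case: (boolP (x \in hverts G)) => xV; rewrite ?andbF ?andbT //=.
  by case: (asbool _).
- rewrite -setI_eq0; apply/eqP/setP => x; rewrite !inE.
  by case: (x \in hverts G); case: (asbool _).
- apply/set0Pn; exists v1; rewrite inE v1V /=; apply/asboolP; by left.
- apply/set0Pn; exists v2; rewrite !inE v2V andbT; apply/negP => /andP [_ /asboolP].
  by [].
move=> e he; case: (wf e he) => seV _.
case: (boolP [exists a in e, a \in A]) => [/exists_inP [a ae aA]|na].
  apply/orP; left; apply/subsetP => b be; rewrite inE (subsetP seV b be) /=.
  apply/asboolP; move: aA; rewrite inE => /andP [_ /asboolP ra].
  exact: ext ra he ae be.
apply/orP; right; apply/subsetP => b be; rewrite inE (subsetP seV b be) andbT.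
by apply: contra na => bA; apply/exists_inP; exists b.
Qed.

Lemma shift_dvd (P : {poly rat}) :
  (('X - 1) ^+ 2 %| P) = ('X ^+ 2 %| P \Po ('X + 1)).
Proof.
have e1 : (('X - 1) ^+ 2 : {poly rat}) \Po ('X + 1) = 'X ^+ 2.
  by rewrite expr2 comp_polyM comp_polyB comp_polyX -polyC1 comp_polyC polyC1 addrK -expr2.
have e2 : ('X ^+ 2 : {poly rat}) \Po ('X - 1) = ('X - 1) ^+ 2.
  by rewrite expr2 comp_polyM comp_polyX -expr2.
apply/idP/idP => h.
  by rewrite -e1; apply: dvdp_comp_poly.
have := dvdp_comp_poly ('X - 1) h; rewrite e2.
by rewrite -polyC1 comp_polyXaddC_K.
Qed.

Lemma cop_X2 : coprimep ('X ^+ 2) ('X + 1 : {poly rat}).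
Proof.
apply: coprimep_expl.
have -> : ('X + 1 : {poly rat}) = 'X - (-1)%:P by rewrite polyCN opprK polyC1.
by rewrite coprimep_XsubC /root hornerX oppr_eq0 oner_eq0.
Qed.

Unset Implicit Arguments.

Theorem corollary5 (T : finType) (H : hypergraph T) (w : T) (V1 V2 : {set T}) :
  wf_hypergraph H ->
  connected H ->
  w \in hverts H ->
  V1 \proper hverts H -> V2 \proper hverts H ->
  V1 :|: V2 = hverts H ->
  V1 :&: V2 = [set w] ->
  (forall e, e \in hedges H -> [|| w \in e, e \subset V1 | e \subset V2]) ->
  let I' := [set V0 : {set T} | indep H V0 && ((V1 \subset V0) || (V2 \subset V0))
                                & asbool (connected (hdelete H V0))] in
  (('X - 1) ^+ 2 %| chrom_poly H)%R =
  ('X ^+ 2 %| \sum_(V0 in I') chrom_poly (hdelete H V0))%R.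
Proof.
move=> wf conn wV pV1 pV2 VU VI hE I'.
have wV1 : w \in V1 by have := set11 w; rewrite -VI inE => /andP [].
have wV2 : w \in V2 by have := set11 w; rewrite -VI inE => /andP [].
have F1 : chrom_poly H \Po ('X + 1) =
    ('X + 1) * \sum_(V0 : {set T} | indep H V0 && (w \in V0)) chrom_poly (hdelete H V0).
  apply: poly_eq_nat => n _.
  rewrite horner_comp hornerM !hornerD hornerX -polyC1 hornerC natr1 (chromE wf).
  by rewrite (step wf wV (fun V0 _ => chromE (@wf_hdelete _ _ V0 wf) n)).
rewrite shift_dvd F1 (Gauss_dvdpr _ cop_X2).
rewrite (bigID (fun V0 => V0 \in I')) /= dvdp_addl.
  congr (_ %| _); apply: eq_bigl => V0.
  case: (boolP (V0 \in I')) => h; rewrite ?andbF ?andbT //.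
  move: h; rewrite inE => /andP [/andP [-> /orP [s1|s2]] _] /=.
    exact: subsetP s1 w wV1.
  exact: subsetP s2 w wV2.
apply: dvdp_big => V0 /andP [/andP [iV0 wV0] nI].
have wfD := @wf_hdelete _ _ V0 wf.
case: (boolP ((V1 \subset V0) || (V2 \subset V0))) => c.
  have nc : ~ connected (hdelete H V0).
    move=> cn; move: nI; rewrite inE iV0 c /=.
    by case: asboolP.
  have [A [B [VAB dAB A0 B0 sE]]] := disconn_split wfD nc.
  exact: X2_split wfD VAB dAB A0 B0 sE.
move: c; rewrite negb_or => /andP [n1 n2].
have sV1 := proper_sub pV1; have sV2 := proper_sub pV2.
apply: (X2_split (A := (hverts H :\: V0) :&: V1) (B := (hverts H :\: V0) :&: V2)) => //.
- by rewrite /hdelete /induced /= -setIUr VU; apply/esym/setIidPl; exact: subsetDl.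
- rewrite -setI_eq0; apply/eqP/setP => x; rewrite !inE.
  case: (boolP (x \in V1)) => x1; case: (boolP (x \in V2)) => x2; rewrite ?andbF //=.
  have : x \in V1 :&: V2 by rewrite inE x1 x2.
  by rewrite VI inE => /eqP ->; rewrite wV0.
- have /subsetPn [x x1 xV0] := n1; apply/set0Pn; exists x.
  by rewrite !inE x1 xV0 (subsetP sV1 x x1).
- have /subsetPn [x x2 xV0] := n2; apply/set0Pn; exists x.
  by rewrite !inE x2 xV0 (subsetP sV2 x x2).
move=> e; rewrite /hdelete /induced /= inE => /andP [he se].
have we : w \notin e.
  by apply/negP => /(subsetP se); rewrite inE wV0.
move: (hE e he); rewrite (negbTE we) /= => /orP [s1|s2].
  by rewrite subsetI se s1.
by rewrite !subsetI se s2 orbT.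
Qed.
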